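(* Let $H$ be a Byzantine linearizable history of a reliable broadcast object, and suppose that every correct process invokes deliver$(j,ts)$ infinitely often for every process $j$ and timestamp $ts$ (all messages are eventually pulled). Say that a process delivers $m$ for $(j,ts)$ if one of its deliver$(j,ts)$ invocations returns $m\neq\bot$. Then: (Validity) if a correct process $j$ broadcasts $m$ (with timestamp $ts$), then all correct processes eventually deliver $m$; (Agreement) if a correct process delivers $m$ for $(j,ts)$, then all correct processes eventually deliver $m$ for $(j,ts)$; (Integrity) no correct process delivers two different messages for the same $(j,ts)$, and if $j$ is correct then a correct process delivers $m$ for $(j,ts)$ only if $j$ previously invoked broadcast$(ts,m)$.
   Context: Reliable broadcast object (sequential specification): operations broadcast$(ts,v)$ and deliver$(j,ts)$; deliver$(j,ts)$ returns the value $v$ of the first broadcast$(ts,v)$ invoked by process $j$ before it, and $\bot$ if $j$ invoked no such broadcast before it. Processes $\Pi=\{1,\dots,n\}$; up to $f$ may be Byzantine (arbitrary behavior), the others are correct. A history $H$ (sequence of invocation/response events) is linearizable if there is a sequential history, obtained by removing some pending operations and completing others, that preserves the real-time order of operations (response before invocation) and satisfies the sequential specification. $H|_{correct}$ is the subsequence of events of correct processes. $H$ is Byzantine linearizable if there is a linearizable history $H'$ with $H'|_{correct}=H|_{correct}$. *)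

(* Defs.v *)
From mathcomp Require Import all_boot.
Set Implicit Arguments. Unset Strict Implicit. Unset Printing Implicit Defensive.

Section RB.
Variables (n : nat) (V : Type).

Inductive op : Type :=
| Broadcast (ts : nat) (v : V)
| Deliver (j : 'I_n) (ts : nat).

(** Responses: broadcast returns an acknowledgment, deliver returns a value or bot (None). *)
Inductive resp : Type :=
| RAck
| RVal (r : option V).

Inductive event : Type :=
| Inv (p : 'I_n) (o : op)
| Res (p : 'I_n) (r : resp).

Definition evproc (e : event) : 'I_n :=
  match e with Inv p _ => p | Res p _ => p end.

(** A (possibly infinite) history: position i holds an event or nothing
    (None is padding, so that finite histories are also representable). *)
Definition history := nat -> option event.

Definition is_p_ev (H : history) (p : 'I_n) (k : nat) : Prop :=
  exists e, H k = Some e /\ evproc e = p.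

Definition next_of (H : history) (p : 'I_n) (i k : nat) : Prop :=
  i < k /\ is_p_ev H p k /\ forall l, i < l -> l < k -> ~ is_p_ev H p l.

Definition well_formed (H : history) : Prop :=
  (forall i p o k, H i = Some (Inv p o) -> next_of H p i k ->
      exists r, H k = Some (Res p r)) /\
  (forall k p r, H k = Some (Res p r) ->
      exists i o, H i = Some (Inv p o) /\ next_of H p i k).

Definition complete_at (H : history) (i k : nat) (r : resp) : Prop :=
  exists p o, H i = Some (Inv p o) /\ next_of H p i k /\ H k = Some (Res p r).

(** Sequential specification, evaluated in a sequential history given by
    positions [pos] (pos i = Some x: the operation invoked at i is the x-th
    operation of the sequential history; None: removed).
    [first_bcast H pos j ts x v]: the first broadcast(ts,_) by j before
    position x has value v. *)
Definition first_bcast (H : history) (pos : nat -> option nat)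
    (j : 'I_n) (ts x : nat) (v : V) : Prop :=
  exists i0 x0, H i0 = Some (Inv j (Broadcast ts v)) /\ pos i0 = Some x0 /\ x0 < x /\
    forall i1 x1 v1, H i1 = Some (Inv j (Broadcast ts v1)) -> pos i1 = Some x1 ->
      x1 < x -> x0 <= x1.

Definition no_bcast_before (H : history) (pos : nat -> option nat)
    (j : 'I_n) (ts x : nat) : Prop :=
  forall i1 x1 v1, H i1 = Some (Inv j (Broadcast ts v1)) -> pos i1 = Some x1 -> ~ (x1 < x).

Definition seq_spec (H : history) (pos : nat -> option nat) (o : op) (x : nat)
    (r : resp) : Prop :=
  match o with
  | Broadcast _ _ => r = RAck
  | Deliver j ts =>
      (exists v, first_bcast H pos j ts x v /\ r = RVal (Some v)) \/
      (no_bcast_before H pos j ts x /\ r = RVal None)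
  end.

(** Linearizability: there is a sequential history (an injective assignment of
    positions to a set of operations that contains all complete operations and
    possibly some pending ones, with chosen responses [rsp] for the completed
    pending ones) that preserves real-time order and satisfies the sequential
    specification. *)
Definition linearizable (H : history) : Prop :=
  well_formed H /\
  exists (pos : nat -> option nat) (rsp : nat -> resp),
    (forall i x, pos i = Some x -> exists p o, H i = Some (Inv p o)) /\
    (forall i k r, complete_at H i k r -> pos i <> None /\ rsp i = r) /\
    (forall i i' x, pos i = Some x -> pos i' = Some x -> i = i') /\
    (forall a ka ra b xa xb, complete_at H a ka ra -> ka < b ->
        pos a = Some xa -> pos b = Some xb -> xa < xb) /\
    (forall i p o x, H i = Some (Inv p o) -> pos i = Some x ->
        seq_spec H pos o x (rsp i)).

Definition correct_ev (correct : {set 'I_n}) (H : history) (i : nat) : Prop :=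
  exists e, H i = Some e /\ evproc e \in correct.

(** H|correct = H'|correct: an order-preserving bijection between the
    positions of correct events of H and of H', preserving the events. *)
Definition same_correct (correct : {set 'I_n}) (H H' : history) : Prop :=
  exists phi : nat -> nat,
    (forall i, correct_ev correct H i -> correct_ev correct H' (phi i) /\ H' (phi i) = H i) /\
    (forall i i', correct_ev correct H i -> correct_ev correct H i' -> i < i' -> phi i < phi i') /\
    (forall k, correct_ev correct H' k -> exists i, correct_ev correct H i /\ phi i = k).

Definition byz_linearizable (correct : {set 'I_n}) (H : history) : Prop :=
  exists H', linearizable H' /\ same_correct correct H H'.

Definition delivers (H : history) (p j : 'I_n) (ts : nat) (m : V) : Prop :=
  exists i k, H i = Some (Inv p (Deliver j ts)) /\ next_of H p i k /\
    H k = Some (Res p (RVal (Some m))).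

End RB.

Arguments RAck {V}.
Arguments RVal {V} r.
Arguments Broadcast {n V} ts v.
Arguments Deliver {n V} j ts.

(* Main.v *)
Require Import Defs.
From mathcomp Require Import all_boot.

Theorem lemma6p2 (n f : nat) (V : Type) (correct : {set 'I_n}) (H : history n V)
  (Hf : #|~: correct| <= f)
  (Hbl : byz_linearizable correct H)
  (Hpull : forall p, p \in correct -> forall (j : 'I_n) (ts N : nat),
      exists i, N <= i /\ H i = Some (Inv p (Deliver j ts))) :
  (* Validity *)
  (forall (j : 'I_n) ts (m : V) i, j \in correct ->
      H i = Some (Inv j (Broadcast ts m)) ->
      (forall i' m', i' < i -> H i' = Some (Inv j (Broadcast ts m')) -> m' = m) ->
      forall p, p \in correct -> delivers H p j ts m) /\
  (* Agreement *)
  (forall (p j : 'I_n) ts (m : V), p \in correct -> delivers H p j ts m ->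
      forall q, q \in correct -> delivers H q j ts m) /\
  (* Integrity (no two different messages) *)
  (forall (p j : 'I_n) ts (m1 m2 : V), p \in correct ->
      delivers H p j ts m1 -> delivers H p j ts m2 -> m1 = m2) /\
  (* Integrity (only broadcast messages are delivered, if the sender is correct) *)
  (forall (p j : 'I_n) ts (m : V) i k, p \in correct -> j \in correct ->
      H i = Some (Inv p (Deliver j ts)) -> next_of H p i k ->
      H k = Some (Res p (RVal (Some m))) ->
      exists b, b < k /\ H b = Some (Inv j (Broadcast ts m))).
Proof.
case: Hbl => H' [[WF [pos [rsp [Hpos [Hcomp [Hinj [Hrt Hspec]]]]]]] [phi [P1 [P2 P3]]]].
have mono : forall i i', correct_ev correct H i -> correct_ev correct H i' ->
    i <= i' -> phi i <= phi i'.
  move=> i i' Ci Ci'; rewrite leq_eqVlt => /orP[/eqP->//|lt].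
  by apply: ltnW; apply: P2.
have next_tr : forall p i k, p \in correct -> is_p_ev H p i -> next_of H p i k ->
    next_of H' p (phi i) (phi k).
  move=> p i k pc [e [He ep]] [ik [[e' [He' ep']] nb]].
  have Ci : correct_ev correct H i by exists e; rewrite He ep.
  have Ck : correct_ev correct H k by exists e'; rewrite He' ep'.
  split; first exact: P2.
  split; first by exists e'; rewrite (P1 _ Ck).2.
  move=> l il lk [e2 [He2 ep2]].
  have Cl : correct_ev correct H' l by exists e2; rewrite He2 ep2.
  case: (P3 _ Cl) => l0 [Cl0 El0].
  case: (ltnP i l0) => [il0|]; last first.
    move=> /(mono _ _ Cl0 Ci); rewrite El0 => h.
    by move: (leq_trans il h); rewrite ltnn.
  case: (ltnP l0 k) => [l0k|]; last first.
    move=> /(mono _ _ Ck Cl0); rewrite El0 => h.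
    by move: (leq_trans lk h); rewrite ltnn.
  apply: (nb l0 il0 l0k); exists e2; split => //.
  by rewrite -(P1 _ Cl0).2 El0.
have ex_next : forall p i, (exists k, i < k /\ is_p_ev H p k) -> exists k, next_of H p i k.
  move=> p i ex.
  pose b k := (i < k) && (if H k is Some e then evproc e == p else false).
  have bP : forall k, b k <-> (i < k /\ is_p_ev H p k).
    move=> k; rewrite /b /is_p_ev; case: (H k) => [e|]; split.
    - by case/andP => -> /eqP <-; split => //; exists e.
    - by case=> -> [e' [[<-] ->]]; rewrite eqxx.
    - by case/andP.
    - by case=> _ [e' []].
  have exb : exists k, b k by case: ex => k /bP; exists k.
  case: (ex_minnP exb) => k /bP [ik pk] kmin.
  exists k; split=> //; split=> // l il lk pl.
  have : k <= l by apply: kmin; apply/bP.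
  by rewrite leqNgt lk.
have comp_tr : forall p i o, p \in correct -> H i = Some (Inv p o) -> forall k,
    next_of H p i k ->
    exists r x, H k = Some (Res p r) /\ complete_at H' (phi i) (phi k) r /\
      pos (phi i) = Some x /\ rsp (phi i) = r /\ seq_spec H' pos o x r.
  move=> p i o pc Hi k nk.
  have Ci : correct_ev correct H i by exists (Inv p o); rewrite Hi.
  have nk' := next_tr p i k pc (ex_intro _ (Inv p o) (conj Hi erefl)) nk.
  have Hi' : H' (phi i) = Some (Inv p o) by rewrite (P1 _ Ci).2.
  case: WF => WF1 _.
  case: (WF1 _ _ _ _ Hi' nk') => r Hk'.
  have Ck : correct_ev correct H k.
    by case: nk => _ [[e [He ep]] _]; exists e; rewrite He ep.
  have Hk : H k = Some (Res p r) by rewrite -(P1 _ Ck).2.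
  have cmp : complete_at H' (phi i) (phi k) r by exists p, o.
  case: (Hcomp _ _ _ cmp) => npos rspE.
  case E: (pos (phi i)) npos => [x|] // _.
  exists r, x; split; first by [].
  split; first by [].
  split; first by [].
  split; first by [].
  rewrite -rspE; exact: Hspec Hi' E.
have fb_le : forall j ts x1 x2 m1 m2, x1 <= x2 -> first_bcast H' pos j ts x1 m1 ->
    first_bcast H' pos j ts x2 m2 -> m1 = m2.
  move=> j ts x1 x2 m1 m2 le [i0 [x0 [Hi0 [P0 [lt0 min0]]]]]
     [i0' [x0' [Hi0' [P0' [lt0' min0']]]]].
  have a : x0' <= x0 by apply: (min0' _ _ _ Hi0 P0); exact: leq_trans lt0 le.
  have b : x0 <= x0' by apply: (min0 _ _ _ Hi0' P0'); exact: leq_ltn_trans a lt0.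
  have e : x0 = x0' by apply/eqP; rewrite eqn_leq a b.
  subst x0'. have ei := Hinj _ _ _ P0 P0'. subst i0'.
  by move: Hi0'; rewrite Hi0 => -[->].
have fb_uniq : forall j ts x1 x2 m1 m2, first_bcast H' pos j ts x1 m1 ->
    first_bcast H' pos j ts x2 m2 -> m1 = m2.
  move=> j ts x1 x2 m1 m2 F1 F2; case: (leqP x1 x2) => h.
    exact: fb_le h F1 F2.
  symmetry; exact: fb_le (ltnW h) F2 F1.
have deliv_fb : forall p j ts m i k, p \in correct -> H i = Some (Inv p (Deliver j ts)) ->
    next_of H p i k -> H k = Some (Res p (RVal (Some m))) ->
    exists x, pos (phi i) = Some x /\ first_bcast H' pos j ts x m /\
      complete_at H' (phi i) (phi k) (RVal (Some m)).
  move=> p j ts m i k pc Hi nk Hk.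
  case: (comp_tr _ _ _ pc Hi _ nk) => r [x [Hk' [cmp [Px [_ sp]]]]].
  move: Hk' cmp sp; rewrite Hk => -[<-] cmp sp.
  case: sp => [[v [F E]]|[_ E]] //.
  case: E => ev; subst v.
  by exists x.
have evC : forall i e, H i = Some e -> evproc e \in correct -> correct_ev correct H i.
  by move=> i e He ec; exists e.
split.
  move=> j ts m i jc Hi Hprev p pc.
  have [kb nkb] : exists kb, next_of H j i kb.
    apply: ex_next; case: (Hpull j jc j ts i.+1) => d [le Hd].
    by exists d; split => //; exists (Inv j (Deliver j ts)).
  case: (comp_tr _ _ _ jc Hi _ nkb) => rb [x0 [Hkb [cmpb [Px0 _]]]].
  case: (Hpull p pc j ts kb.+1) => d [led Hd].
  have [kd nkd] : exists kd, next_of H p d kd.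
    apply: ex_next; case: (Hpull p pc j ts d.+1) => d' [le' Hd'].
    by exists d'; split => //; exists (Inv p (Deliver j ts)).
  case: (comp_tr _ _ _ pc Hd _ nkd) => r [xd [Hkd [cmpd [Pxd [_ sp]]]]].
  have Ckb := evC _ _ Hkb jc.
  have Cd := evC _ _ Hd pc.
  have Ci := evC _ _ Hi jc.
  have ltx : x0 < xd by apply: (Hrt _ _ _ _ _ _ cmpb _ Px0 Pxd); apply: P2.
  have Hi' : H' (phi i) = Some (Inv j (Broadcast ts m)) by rewrite (P1 _ Ci).2.
  case: sp => [[v [F E]]|[NB _]]; last first.
    by case: (NB _ _ _ Hi' Px0 ltx).
  have vm : v = m.
    case: F => i0 [x0' [Hi0 [P0 [lt0 min0]]]].
    have Ci0 : correct_ev correct H' i0 by exists (Inv j (Broadcast ts v)); rewrite Hi0.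
    case: (P3 _ Ci0) => b [Cb Eb].
    have Hb : H b = Some (Inv j (Broadcast ts v)) by rewrite -(P1 _ Cb).2 Eb.
    case: (ltngtP b i) => [bi|ib|bi].
    - exact: Hprev bi Hb.
    - have kbb : kb < b.
        case: nkb => ikb [_ nb]; case: (ltngtP kb b) => // [bkb|ekb].
        + by case: (nb b ib bkb); exists (Inv j (Broadcast ts v)).
        + by move: Hb; rewrite -ekb Hkb.
      have h1 : x0 < x0'.
        apply: (Hrt _ _ _ _ _ _ cmpb _ Px0 P0); rewrite -Eb; exact: P2 Ckb Cb kbb.
      have h2 : x0' <= x0 by apply: (min0 _ _ _ Hi' Px0 ltx).
      by move: (leq_trans h1 h2); rewrite ltnn.
    - by move: Hb; rewrite bi Hi => -[->].
  subst v; exists d, kd; split => //; split => //.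
  by rewrite Hkd E.
split.
  move=> p j ts m pc [i [k [Hi [nk Hk]]]] q qc.
  case: (deliv_fb _ _ _ _ _ _ pc Hi nk Hk) => xp [Pxp [Fp cmpp]].
  case: (Hpull q qc j ts k.+1) => d [led Hd].
  have [kd nkd] : exists kd, next_of H q d kd.
    apply: ex_next; case: (Hpull q qc j ts d.+1) => d' [le' Hd'].
    by exists d'; split => //; exists (Inv q (Deliver j ts)).
  case: (comp_tr _ _ _ qc Hd _ nkd) => r [xd [Hkd [cmpd [Pxd [_ sp]]]]].
  have Ck := evC _ _ Hk pc.
  have Cd := evC _ _ Hd qc.
  have ltx : xp < xd by apply: (Hrt _ _ _ _ _ _ cmpp _ Pxp Pxd); apply: P2.
  case: sp => [[v [F E]]|[NB _]].
    have vm := fb_uniq _ _ _ _ _ _ F Fp; subst v.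
    by exists d, kd; split => //; split => //; rewrite Hkd E.
  case: Fp => i0 [x0 [Hi0 [P0 [lt0 _]]]].
  case: (NB _ _ _ Hi0 P0); exact: ltn_trans lt0 ltx.
split.
  move=> p j ts m1 m2 pc [i [k [Hi [nk Hk]]]] [i' [k' [Hi' [nk' Hk']]]].
  case: (deliv_fb _ _ _ _ _ _ pc Hi nk Hk) => x1 [_ [F1 _]].
  case: (deliv_fb _ _ _ _ _ _ pc Hi' nk' Hk') => x2 [_ [F2 _]].
  exact: fb_uniq F1 F2.
move=> p j ts m i k pc jc Hi nk Hk.
case: (deliv_fb _ _ _ _ _ _ pc Hi nk Hk) => xp [Pxp [F cmpp]].
case: F => i0 [x0 [Hi0 [P0 [lt0 _]]]].
have Ci0 : correct_ev correct H' i0 by exists (Inv j (Broadcast ts m)); rewrite Hi0.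
case: (P3 _ Ci0) => b [Cb Eb].
have Hb : H b = Some (Inv j (Broadcast ts m)) by rewrite -(P1 _ Cb).2 Eb.
exists b; split => //.
have Ck := evC _ _ Hk pc.
case: (ltngtP b k) => // [kb|bk].
  have h : xp < x0.
    apply: (Hrt _ _ _ _ _ _ cmpp _ Pxp P0); rewrite -Eb; exact: P2 Ck Cb kb.
  by move: (ltn_trans h lt0); rewrite ltnn.
by move: Hb; rewrite bk Hk.
Qed.
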